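(* Let $k'/k$ be a finite field extension and let $G=\mathrm{R}_{k'/k}(\mathbb{G}_m)$, acting on $k'$ by multiplication (i.e. $G(A)=(k'\otimes_kA)^\times$ acting on $k'\otimes_k A$). Let $W$ be a proper nonzero $k$-subspace of $k'$ and let $S=\mathrm{Stab}_G(W)$, the subgroup scheme with $S(A)=\{g\in G(A)\mid g(W\otimes_kA)\subseteq W\otimes_kA\}$. Then there exists an intermediate field $k\subseteq E\subsetneq k'$ such that $S\subseteq\mathrm{R}_{E/k}(\mathbb{G}_m)$.
   Context: $\mathrm{R}_{k'/k}$ denotes Weil restriction; $\mathrm{R}_{E/k}(\mathbb{G}_m)$ is regarded as a subgroup of $\mathrm{R}_{k'/k}(\mathbb{G}_m)$ via $E\subseteq k'$. *)

(* Defs.v *)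
From HB Require Import structures.
From mathcomp Require Import all_boot all_algebra all_field.
Set Implicit Arguments. Unset Strict Implicit. Unset Printing Implicit Defensive.
Import GRing.Theory.
Local Open Scope ring_scope.

(* Functor-of-points model of k' ⊗_k A for a finite extension L/F (k'/k) and a
   commutative F-algebra A: we identify L ⊗_F A with the free A-module A^n,
   n = [L:F], via the canonical F-basis (vbasis fullv) of L. *)
Section Tensor.
Variables (F : fieldType) (L : fieldExtType F) (A : comAlgType F).
Local Notation n := (\dim (fullv : {vspace L})).
Local Notation bL := (vbasis (fullv : {vspace L})).

Definition tens (x : L) (a : A) : 'rV[A]_n :=
  \row_i ((coord bL i x)%:A * a).

(* multiplication of L ⊗_F A (structure constants of L in the basis bL) *)
Definition tmul (u v : 'rV[A]_n) : 'rV[A]_n :=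
  \row_k \sum_(i < n) \sum_(j < n)
     (u 0 i * v 0 j * (coord bL k (tnth bL i * tnth bL j))%:A).

Definition tone : 'rV[A]_n := tens 1 1.

Definition in_tens (V : {vspace L}) (u : 'rV[A]_n) : Prop :=
  exists c : 'I_(\dim V) -> A, u = \sum_(j < \dim V) tens (tnth (vbasis V) j) (c j).

Definition tunit (g : 'rV[A]_n) : Prop := exists h, tmul g h = tone.

Definition in_stab (W : {vspace L}) (g : 'rV[A]_n) : Prop :=
  tunit g /\ forall u, in_tens W u -> in_tens W (tmul g u).

(* g ∈ R_{E/F}(G_m)(A) = (E ⊗ A)^×, viewed inside (L ⊗ A)^× *)
Definition in_RGm (E : {vspace L}) (g : 'rV[A]_n) : Prop :=
  in_tens E g /\ exists h, in_tens E h /\ tmul g h = tone.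
End Tensor.

(* Main.v *)
Require Import Defs.
From HB Require Import structures.
From mathcomp Require Import all_boot all_algebra all_field.
Set Implicit Arguments. Unset Strict Implicit. Unset Printing Implicit Defensive.
Import GRing.Theory.
Local Open Scope ring_scope.

Lemma CH_inv (R : comNzRingType) m (M : 'M[R]_m) (c : R) :
  c * \det M = 1 ->
  exists (N : nat) (cs : nat -> R), \sum_(k < N) cs k *: M ^+ k.+1 = 1%:M.
Proof.
case: m M => [|m] M cM.
  by exists 0%N, (fun _ => 0); rewrite big_ord0; apply/matrixP => [[]].
set p := char_poly M.
have CH := Cayley_Hamilton M.
have E : horner_mx M p = \sum_(i < size p) p`_i *: M ^+ i.
  rewrite -{1}[p]coefK poly_def rmorph_sum; apply: eq_bigr => i _.
  by rewrite -[LHS]/(horner_mx M (p`_i *: 'X^i)) horner_mxZ rmorphXn /= horner_mx_X.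
rewrite -/p E size_char_poly big_ord_recl expr0 char_poly_det in CH.
set d := - ((-1) ^+ m.+1 * c).
exists m.+1, (fun k => d * p`_k.+1).
have S : \sum_(i < m.+1) p`_(lift ord0 i) *: M ^+ lift ord0 i =
         - ((-1) ^+ m.+1 * \det M)%:A by apply/eqP; rewrite -addr_eq0 addrC CH.
transitivity (d *: \sum_(i < m.+1) p`_(lift ord0 i) *: M ^+ lift ord0 i).
  by rewrite scaler_sumr; apply: eq_bigr => i _; rewrite scalerA lift0.
rewrite S /d scalerN scaleNr opprK scalerA mulrACA cM mulr1 -exprD -signr_odd oddD addbb expr0.
by rewrite scale1r.
Qed.

Section Lemmas.
Variables (F : fieldType) (L : fieldExtType F) (A : comAlgType F).
Local Notation n := (\dim (fullv : {vspace L})).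
Local Notation bL := (vbasis (fullv : {vspace L})).
Local Notation b i := (tnth bL i).
Implicit Types (x y z : L) (a c e : A) (u v w : 'rV[A]_n).

Lemma tensE x a k : tens x a 0 k = coord bL k x *: a.
Proof. by rewrite mxE mulr_algl. Qed.

Lemma tensDl x y a : tens (x + y) a = tens x a + tens y a.
Proof. by apply/rowP => k; rewrite !mxE !mulr_algl linearD scalerDl. Qed.

Lemma tensZl (r : F) x a : tens (r *: x) a = tens x (r *: a).
Proof. by apply/rowP => k; rewrite !mxE !mulr_algl linearZ /= scalerA mulrC -scalerA. Qed.

Lemma tensDr x a c : tens x (a + c) = tens x a + tens x c.
Proof. by apply/rowP => k; rewrite !mxE !mulr_algl scalerDr. Qed.

Lemma tensMr x a c : tens x (c * a) = c *: tens x a.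
Proof. by apply/rowP => k; rewrite !mxE !mulr_algl scalerAr. Qed.

Lemma tens0l a : tens (0 : L) a = 0 :> 'rV[A]_n.
Proof. by apply/rowP => k; rewrite !mxE !mulr_algl linear0 scale0r. Qed.

Lemma tens0r x : tens x (0 : A) = 0.
Proof. by apply/rowP => k; rewrite !mxE !mulr_algl scaler0. Qed.

Lemma tens_suml I (r : seq I) (P : pred I) (f : I -> L) a :
  tens (\sum_(i <- r | P i) f i) a = \sum_(i <- r | P i) tens (f i) a.
Proof.
elim: r => [|j r IH]; first by rewrite !big_nil tens0l.
by rewrite !big_cons; case: (P j); rewrite ?tensDl IH.
Qed.

Lemma tens_sumr I (r : seq I) (P : pred I) (f : I -> A) x :
  tens x (\sum_(i <- r | P i) f i) = \sum_(i <- r | P i) tens x (f i).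
Proof.
elim: r => [|j r IH]; first by rewrite !big_nil tens0r.
by rewrite !big_cons; case: (P j); rewrite ?tensDr IH.
Qed.

Lemma bL_nth (i : 'I_n) : bL`_i = b i.
Proof. by rewrite -tnth_nth. Qed.

Lemma tens_basis x a : tens x a = \sum_(i < n) tens (b i) (coord bL i x *: a).
Proof.
rewrite {1}(coord_vbasis (memvf x)) tens_suml; apply: eq_bigr => i _.
by rewrite tensZl bL_nth.
Qed.

Lemma dec u : u = \sum_(i < n) tens (b i) (u 0 i).
Proof.
apply/rowP => k; rewrite summxE (bigD1 k) //= big1 => [|i /negPf ik].
  by rewrite tensE -bL_nth coord_free ?eqxx ?scale1r ?addr0 //; exact: basis_free (vbasisP _).
by rewrite tensE -bL_nth coord_free ?ik ?scale0r //; exact: basis_free (vbasisP _).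
Qed.

Definition lift (f : 'End(L)) u : 'rV[A]_n := \sum_(i < n) tens (f (b i)) (u 0 i).

Lemma liftD f u v : lift f (u + v) = lift f u + lift f v.
Proof. by rewrite /lift -big_split; apply: eq_bigr => i _; rewrite mxE tensDr. Qed.

Lemma lift0 f : lift f 0 = 0.
Proof. by rewrite /lift big1 // => i _; rewrite mxE tens0r. Qed.

Lemma liftZ f c u : lift f (c *: u) = c *: lift f u.
Proof. by rewrite /lift scaler_sumr; apply: eq_bigr => i _; rewrite mxE tensMr. Qed.

Lemma lift_sum f I (r : seq I) (P : pred I) (g : I -> 'rV[A]_n) :
  lift f (\sum_(i <- r | P i) g i) = \sum_(i <- r | P i) lift f (g i).
Proof.
elim: r => [|j r IH]; first by rewrite !big_nil lift0.
by rewrite !big_cons; case: (P j); rewrite ?liftD IH.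
Qed.

Lemma lift_tens f x a : lift f (tens x a) = tens (f x) a.
Proof.
rewrite /lift {2}(coord_vbasis (memvf x)) linear_sum tens_suml.
by apply: eq_bigr => i _; rewrite tensE linearZ tensZl bL_nth.
Qed.

Lemma lift_id u : lift \1%VF u = u.
Proof. by rewrite {2}(dec u) /lift; apply: eq_bigr => i _; rewrite id_lfunE. Qed.

Lemma lift_comp f g u : lift (f \o g)%VF u = lift f (lift g u).
Proof. by rewrite [lift g u]/lift lift_sum [LHS]/lift; apply: eq_bigr => i _; rewrite lift_tens comp_lfunE. Qed.

Lemma lift_sub f g u : lift (f - g) u = lift f u - lift g u.
Proof.
rewrite /lift -sumrB; apply: eq_bigr => i _.
by rewrite add_lfunE opp_lfunE tensDl; congr (_ + _); apply/rowP=> k; rewrite !mxE !mulr_algl linearN scaleNr.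
Qed.

Lemma lift_zero u : lift 0 u = 0.
Proof. by rewrite /lift big1 // => i _; rewrite zero_lfunE tens0l. Qed.


Lemma tmul_dec u v :
  tmul u v = \sum_(i < n) \sum_(j < n) tens (b i * b j) (u 0 i * v 0 j).
Proof.
apply/rowP => k; rewrite !mxE summxE; apply: eq_bigr => i _.
rewrite summxE; apply: eq_bigr => j _.
by rewrite tensE mulr_algr.
Qed.

Lemma tmulC u v : tmul u v = tmul v u.
Proof.
rewrite !tmul_dec exchange_big; apply: eq_bigr => i _; apply: eq_bigr => j _.
by rewrite mulrC [_ * u 0 j]mulrC.
Qed.

Lemma tmulDl u v w : tmul (u + v) w = tmul u w + tmul v w.
Proof.
rewrite !tmul_dec -big_split; apply: eq_bigr => i _.
rewrite -big_split; apply: eq_bigr => j _.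
by rewrite mxE mulrDl tensDr.
Qed.

Lemma tmul0l v : tmul 0 v = 0.
Proof.
rewrite tmul_dec big1 // => i _; rewrite big1 // => j _.
by rewrite mxE mul0r tens0r.
Qed.

Lemma tmulDr u v w : tmul u (v + w) = tmul u v + tmul u w.
Proof. by rewrite !(tmulC u) tmulDl. Qed.

Lemma tmul0r v : tmul v 0 = 0.
Proof. by rewrite tmulC tmul0l. Qed.

Lemma tmulZr c u v : tmul u (c *: v) = c *: tmul u v.
Proof.
rewrite !tmul_dec scaler_sumr; apply: eq_bigr => i _.
rewrite scaler_sumr; apply: eq_bigr => j _.
by rewrite mxE [u 0 i * _]mulrCA !tensMr.
Qed.

Lemma tmul_suml I (r : seq I) (P : pred I) (f : I -> 'rV[A]_n) v :
  tmul (\sum_(i <- r | P i) f i) v = \sum_(i <- r | P i) tmul (f i) v.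
Proof.
elim: r => [|j r IH]; first by rewrite !big_nil tmul0l.
by rewrite !big_cons; case: (P j); rewrite ?tmulDl IH.
Qed.

Lemma tmul_sumr I (r : seq I) (P : pred I) (f : I -> 'rV[A]_n) v :
  tmul v (\sum_(i <- r | P i) f i) = \sum_(i <- r | P i) tmul v (f i).
Proof.
elim: r => [|j r IH]; first by rewrite !big_nil tmul0r.
by rewrite !big_cons; case: (P j); rewrite ?tmulDr IH.
Qed.

Lemma tmul_tens x y a c : tmul (tens x a) (tens y c) = tens (x * y) (a * c).
Proof.
rewrite tmul_dec [in RHS](coord_vbasis (memvf x)) [in RHS](coord_vbasis (memvf y)).
rewrite mulr_suml tens_suml; apply: eq_bigr => i _.
rewrite mulr_sumr tens_suml; apply: eq_bigr => j _.
rewrite -scalerAl -scalerAr !tensZl !bL_nth !tensE; congr tens.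
by rewrite -scalerAl -scalerAr !scalerA mulrC.
Qed.

Lemma tmulA u v w : tmul u (tmul v w) = tmul (tmul u v) w.
Proof.
rewrite (dec u) !tmul_suml; apply: eq_bigr => i _.
rewrite (dec v) !(tmul_suml, tmul_sumr); apply: eq_bigr => j _.
rewrite (dec w) !(tmul_suml, tmul_sumr); apply: eq_bigr => k _.
by rewrite !tmul_tens !mulrA.
Qed.

Lemma tmul1 u : tmul (@tone F L A) u = u.
Proof.
rewrite {1}(dec u) tmul_sumr {2}(dec u); apply: eq_bigr => i _.
by rewrite /tone tmul_tens !mul1r.
Qed.


Local Notation one := (@tone F L A).

Definition Mg (g : 'rV[A]_n) : 'M[A]_n :=
  \matrix_(j, k) \sum_(i < n) g 0 i * (coord bL k (b i * b j))%:A.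

Lemma tmulE g u : tmul g u = u *m Mg g.
Proof.
apply/rowP => k; rewrite !mxE exchange_big; apply: eq_bigr => j _.
rewrite mxE mulr_sumr; apply: eq_bigr => i _.
by rewrite [g 0 i * _]mulrC mulrA.
Qed.

Lemma Mg_inv g h : tmul g h = one -> Mg h *m Mg g = 1%:M.
Proof.
move=> H; apply/row_matrixP => i; rewrite !rowE mulmxA -!tmulE tmulA H tmul1.
by rewrite mulmx1.
Qed.

Definition gp g k := iter k (tmul g) one.

Lemma gpE g k : one *m (Mg g) ^+ k = gp g k.
Proof.
elim: k => [|k IH]; first by rewrite expr0 mulmx1.
by rewrite exprSr -mulmxE mulmxA IH -tmulE.
Qed.

Lemma unit_poly g : tunit g ->
  exists N (cs : nat -> A), tmul g (\sum_(k < N) cs k *: gp g k) = one.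
Proof.
move=> [h Hh].
have D : \det (Mg h) * \det (Mg g) = 1 by rewrite -det_mulmx Mg_inv // det1.
have [N [cs Hc]] := CH_inv D.
exists N, cs; rewrite tmul_sumr -[RHS]mulmx1 -Hc mulmx_sumr.
apply: eq_bigr => k _; rewrite tmulZr -scalemxAr gpE.
by [].
Qed.

Lemma in_tensP (V : {vspace L}) u : in_tens V u <-> lift (projv V) u = u.
Proof.
split.
  move=> [c ->]; rewrite lift_sum; apply: eq_bigr => j _.
  by rewrite lift_tens projv_id // vbasis_mem // mem_tnth.
move=> H; exists (fun j => \sum_(i < n) coord (vbasis V) j (projv V (b i)) *: u 0 i).
rewrite -{1}H /lift.
under [RHS]eq_bigr do rewrite tens_sumr.
rewrite exchange_big; apply: eq_bigr => i _.
rewrite {1}(coord_vbasis (memv_proj V (b i))) tens_suml; apply: eq_bigr => j _.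
by rewrite tensZl -tnth_nth.
Qed.

Lemma tens_in (V : {vspace L}) x a : x \in V -> in_tens V (tens x a).
Proof. by move=> xV; apply/in_tensP; rewrite lift_tens projv_id. Qed.

Lemma in_tensD (V : {vspace L}) u v : in_tens V u -> in_tens V v -> in_tens V (u + v).
Proof. by move=> /in_tensP Hu /in_tensP Hv; apply/in_tensP; rewrite liftD Hu Hv. Qed.

Lemma in_tens0 (V : {vspace L}) : in_tens V (0 : 'rV[A]_n).
Proof. by apply/in_tensP; rewrite lift0. Qed.

Lemma in_tensZ (V : {vspace L}) c u : in_tens V u -> in_tens V (c *: u).
Proof. by move=> /in_tensP Hu; apply/in_tensP; rewrite liftZ Hu. Qed.

Lemma in_tens_sum (V : {vspace L}) I (r : seq I) (P : pred I) (f : I -> 'rV[A]_n) :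
  (forall i, P i -> in_tens V (f i)) -> in_tens V (\sum_(i <- r | P i) f i).
Proof.
move=> H; elim: r => [|j r IH]; first by rewrite big_nil; exact: in_tens0.
by rewrite big_cons; case: ifP => Pj //; apply: in_tensD => //; exact: H.
Qed.

Lemma in_tens_mul (E : {aspace L}) u v :
  in_tens E u -> in_tens E v -> in_tens E (tmul u v).
Proof.
move=> [c ->] [d ->]; rewrite tmul_suml; apply: in_tens_sum => i _.
rewrite tmul_sumr; apply: in_tens_sum => j _.
by rewrite tmul_tens; apply: tens_in; rewrite memvM // vbasis_mem // mem_tnth.
Qed.

Fixpoint kerseq (fs : seq 'End(L)) : {vspace L} :=
  if fs is f :: fs' then (lker f :&: kerseq fs')%VS else fullv.

Lemma kill (g : 'rV[A]_n) fs (Q : 'End(L)) :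
  (forall f, f \in fs -> lift f g = 0) ->
  (forall x, x \in kerseq fs -> Q x = 0) -> lift Q g = 0.
Proof.
elim: fs Q => [|f fs IH] Q Hf HQ.
  by rewrite /lift big1 // => i _; rewrite HQ ?memvf // tens0l.
set K' := kerseq fs; set P := projv K'; set f' := (f \o P)%VF.
set psi := (Q \o P \o f'^-1)%VF.
have -> : lift Q g = lift (Q - (psi \o f)%VF) g.
  by rewrite lift_sub lift_comp (Hf f) ?mem_head // lift0 subr0.
apply: IH => [h hfs|x xK]; first by apply: Hf; rewrite in_cons hfs orbT.
rewrite add_lfunE opp_lfunE !comp_lfunE.
set y := (f'^-1)%VF (f x).
have fx : f x = f' x by rewrite comp_lfunE /P projv_id.
have fy : f (P y) = f x.
  have := limg_lfunVK (memv_img f' (memvf x)).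
  by rewrite -fx comp_lfunE.
have Hz : P y - x \in kerseq (f :: fs).
  rewrite /= memv_cap memv_ker linearB /= fy subrr eqxx /=.
  by rewrite rpredB // memv_proj.
by move: (HQ _ Hz); rewrite linearB /= => /eqP; rewrite subr_eq0 => /eqP ->; rewrite subrr.
Qed.

Lemma lift_amulr g x : lift (amulr x) g = tmul g (tens x 1).
Proof.
rewrite {2}(dec g) tmul_suml /lift; apply: eq_bigr => i _.
by rewrite tmul_tens mulr1 /amulr lfunE.
Qed.

Lemma lift_in_kill (V : {vspace L}) u : in_tens V u -> lift (\1 - projv V)%VF u = 0.
Proof. by move/in_tensP => H; rewrite lift_sub lift_id H subrr. Qed.

End Lemmas.

Section Main.
Variables (F : fieldType) (L : fieldExtType F) (W : {vspace L}).
Local Notation n := (\dim (fullv : {vspace L})).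

Definition Rw : 'End(L) := (\1 - projv W)%VF.

Lemma eq_projv v : (v == projv W v) = (v \in W).
Proof. by apply/eqP/idP => [->|H]; [exact: memv_proj | rewrite projv_id]. Qed.

Lemma Rw0 v : (Rw v == 0) = (v \in W).
Proof. by rewrite /Rw add_lfunE opp_lfunE id_lfunE subr_eq0 eq_projv. Qed.

Lemma mem_kerseq (s : seq L) x :
  (x \in kerseq [seq (Rw \o amulr w)%VF | w <- s]) = all (fun w => x * w \in W) s.
Proof.
elim: s => [|w s IH] /=; first exact: memvf.
by rewrite memv_cap memv_ker comp_lfunE Rw0 IH /amulr lfunE.
Qed.

Definition E0 := kerseq [seq (Rw \o amulr w)%VF | w <- vbasis W].

Lemma E0P x : reflect (forall w, w \in W -> x * w \in W) (x \in E0).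
Proof.
rewrite /E0 mem_kerseq; apply: (iffP allP) => H w wW; last by apply: H; exact: vbasis_mem.
rewrite (coord_vbasis wW) mulr_sumr; apply: rpred_sum => i _.
by rewrite -scalerAr memvZ // H // mem_nth // size_tuple.
Qed.

Lemma E0_aspace : is_aspace E0.
Proof.
rewrite /is_aspace has_algid1; last by apply/E0P => w wW; rewrite mul1r.
apply/prodvP => x y /E0P Hx /E0P Hy; apply/E0P => w wW.
by rewrite -mulrA Hx // Hy.
Qed.

Definition E : {subfield L} := ASpace E0_aspace.

Lemma E_proper : W != 0%VS -> W != fullv -> asval E != fullv.
Proof.
move=> W0 Wf; apply: contra Wf => /eqP HE.
have w0 : vpick W != 0 by rewrite vpick0.
rewrite eqEsubv subvf /=; apply/subvP => y _.
have : y / vpick W \in E0 by rewrite -[E0]/(asval E) HE memvf.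
by move/E0P => /(_ _ (memv_pick W)); rewrite mulfVK.
Qed.

End Main.

Unset Implicit Arguments.
Set Strict Implicit.

Theorem lemma5p10 (F : fieldType) (L : fieldExtType F) (W : {vspace L}) :
  W != 0%VS -> W != fullv ->
  exists E : {subfield L},
    (asval E != fullv) /\
    forall (A : comAlgType F) (g : 'rV[A]_(\dim (fullv : {vspace L}))),
      in_stab W g -> in_RGm (asval E) g.
Proof.
move=> W0 Wf; exists (E W); split; first exact: E_proper.
move=> A g [Hu Hst].
have gE : in_tens (asval (E W)) g.
  apply/in_tensP; change (lift (projv (E0 W)) g = g).
  have HQ : lift (\1 - projv (E0 W))%VF g = 0.
    apply: (kill (fs := [seq (Rw W \o amulr w)%VF | w <- vbasis W])).
      move=> f /mapP [w wB ->]; rewrite lift_comp lift_amulr.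
      by apply: lift_in_kill; apply: Hst; apply: tens_in; exact: vbasis_mem.
    move=> x xE; rewrite add_lfunE opp_lfunE id_lfunE projv_id ?subrr //.
  by move: HQ; rewrite lift_sub lift_id => /eqP; rewrite subr_eq0 => /eqP <-.
have [N [cs Hc]] := unit_poly Hu.
split => //; exists (\sum_(k < N) cs k *: gp g k); split => //.
apply: in_tens_sum => k _; apply: in_tensZ.
elim: (nat_of_ord k) => [|m IH]; first by apply: tens_in; exact: mem1v.
exact: in_tens_mul.
Qed.
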